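(* Let $g:[0,1]\to\mathbb{R}$ and let $0<c_1<c_2<\dots<c_r<1$ ($r<\infty$) be points such that $g$ is twice differentiable with bounded second derivative on $[0,1]$ except at the points $c_j$, which are jump discontinuities at which both one-sided limits $g(c_j-)$, $g(c_j+)$ exist and are finite. (i) If $g$ is left-continuous at each $c_j$, then as $n\to\infty$ \[ \sum_{k=1}^{n-1} g\left(\frac kn\right)=n\int_0^1 g(x)\,dx-\frac{g(0)+g(1)}{2}+\sum_{j=1}^r\left(\{nc_j\}-\frac12\right)\left[g(c_j+)-g(c_j-)\right]+\mathcal{O}\left(\frac1n\right), \] where $\{x\}=x-\lfloor x\rfloor$. (ii) If $g$ is right-continuous at $c_j$, then the same formula holds with $\{nc_j\}$ replaced by $\{nc_j\}'$, where $\{x\}'=1+x-\lceil x\rceil$ (the fractional part of $x$, except that it equals $1$ when $x$ is an integer). *)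

(* Defs.v *)
From Stdlib Require Import Reals.
From Coquelicot Require Import Coquelicot.
Open Scope R_scope.

Fixpoint rsum (n : nat) (f : nat -> R) : R :=
  match n with
  | O => 0
  | S k => rsum k f + f k
  end.

Definition floorR (x : R) : R := IZR (Int_part x).
Definition ceilR (x : R) : R := - floorR (- x).

Definition fracR (x : R) : R := x - floorR x.
Definition fracR' (x : R) : R := 1 + x - ceilR x.

Definition regular_pt (r : nat) (c : nat -> R) (x : R) : Prop :=
  0 < x < 1 /\ forall j, (j < r)%nat -> x <> c j.

(* Main.v *)
Require Import Defs.
From Stdlib Require Import Reals.
From Coquelicot Require Import Coquelicot.
From Stdlib Require Import Lra Lia Classical.
Open Scope R_scope.

Lemma rsum_ext n f g : (forall k, (k < n)%nat -> f k = g k) -> rsum n f = rsum n g.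
Proof. induction n; simpl; intros H; auto. rewrite IHn; [rewrite H|]; auto; intros; apply H; lia. Qed.

Lemma rsum_plus n f g : rsum n (fun k => f k + g k) = rsum n f + rsum n g.
Proof. induction n; simpl; [lra| rewrite IHn; lra]. Qed.

Lemma rsum_minus n f g : rsum n (fun k => f k - g k) = rsum n f - rsum n g.
Proof. induction n; simpl; [lra| rewrite IHn; lra]. Qed.

Lemma rsum_scal n a f : rsum n (fun k => a * f k) = a * rsum n f.
Proof. induction n; simpl; [lra| rewrite IHn; lra]. Qed.

Lemma rsum_const n a : rsum n (fun _ => a) = INR n * a.
Proof. induction n; simpl rsum; [simpl; lra| rewrite IHn, S_INR; lra]. Qed.

Lemma rsum_le n f g : (forall k, (k < n)%nat -> f k <= g k) -> rsum n f <= rsum n g.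
Proof. induction n; simpl; intros H; [lra|]. assert (f n <= g n) by (apply H; lia).
 assert (rsum n f <= rsum n g) by (apply IHn; intros; apply H; lia). lra. Qed.

Lemma rsum_abs n f : Rabs (rsum n f) <= rsum n (fun k => Rabs (f k)).
Proof. induction n; simpl; [rewrite Rabs_R0; lra|].
 eapply Rle_trans; [apply Rabs_triang|]. lra. Qed.

Lemma rsum_nonneg n f : (forall k, (k < n)%nat -> 0 <= f k) -> 0 <= rsum n f.
Proof. intros H. rewrite <- (Rmult_0_r (INR n)), <- rsum_const. apply rsum_le; auto. Qed.

Lemma rsum_term_le n f i : (forall k, (k < n)%nat -> 0 <= f k) -> (i < n)%nat -> f i <= rsum n f.
Proof. induction n; intros H Hi; [lia|]. simpl.
 destruct (Nat.eq_dec i n) as [->|Hne].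
 - assert (0 <= rsum n f) by (apply rsum_nonneg; intros; apply H; lia). lra.
 - assert (f i <= rsum n f) by (apply IHn; [intros; apply H; lia| lia]).
   assert (0 <= f n) by (apply H; lia). lra. Qed.

Lemma rsum_swap n m (f : nat -> nat -> R) :
  rsum n (fun k => rsum m (fun j => f k j)) = rsum m (fun j => rsum n (fun k => f k j)).
Proof. induction n; simpl.
 - rewrite rsum_const; lra.
 - rewrite IHn, <- rsum_plus. reflexivity. Qed.

Lemma rsum_shift n f : rsum (S n) f = f O + rsum n (fun k => f (S k)).
Proof. induction n; simpl in *; [lra|]. rewrite IHn. lra. Qed.

Lemma rsum_single n f j : (j < n)%nat -> (forall k, (k < n)%nat -> k <> j -> f k = 0) -> rsum n f = f j.
Proof. induction n; intros Hj H; [lia|]. simpl.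
 destruct (Nat.eq_dec j n) as [->|Hne].
 - rewrite (rsum_ext n f (fun _ => 0)) by (intros; apply H; lia).
   rewrite rsum_const; lra.
 - rewrite IHn by (auto; lia). rewrite (H n) by lia. lra. Qed.

Lemma cont_of_derive f x : ex_derive f x -> continuity_pt f x.
Proof. intros H. apply continuity_pt_filterlim. apply (ex_derive_continuous f x H). Qed.

Lemma mvt_open f a b : a < b -> (forall x, a < x < b -> ex_derive f x) ->
  (forall x, a <= x <= b -> continuity_pt f x) ->
  exists c, a < c < b /\ f b - f a = Derive f c * (b - a).
Proof. intros Hab Hd Hc.
 destruct (MVT f id a b (fun c P => ex_derive_Reals_0 f c (Hd c P))
   (fun c P => derivable_pt_id c) Hab Hc (fun c _ => derivable_continuous_pt _ _ (derivable_pt_id c)))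
   as [c [P HP]].
 exists c; split; auto. rewrite Derive_Reals in HP. rewrite derive_pt_id in HP. unfold id in HP. lra. Qed.

Lemma lip_mvt F a b K : a <= b -> (forall x, a < x < b -> ex_derive F x /\ Rabs (Derive F x) <= K) ->
  (forall x, a <= x <= b -> continuity_pt F x) -> Rabs (F b - F a) <= K * (b - a).
Proof. intros Hab Hd Hc. destruct (Req_dec a b) as [<-|Hne].
 - replace (F a - F a) with 0 by ring. rewrite Rabs_R0. lra.
 - destruct (mvt_open F a b) as [c [Hc1 Hc2]]; [lra| intros; apply Hd; auto| auto|].
   rewrite Hc2, Rabs_mult, (Rabs_right (b - a)) by lra.
   apply Rmult_le_compat_r; [lra| apply Hd; auto]. Qed.

Lemma RInt_lin u v a D : RInt (fun x => a + D * (x - u)) u v = (v - u) * a + D * (v - u)^2 / 2.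
Proof.
 assert (H1 : is_RInt (fun x => a + D * (x - u)) u v (minus (a * v + D * (v - u)^2 / 2) (a * u + D * (u - u)^2 / 2))).
 { apply (is_RInt_derive (fun x => a * x + D * (x - u)^2 / 2) (fun x => a + D * (x - u))).
 - intros x _. auto_derive; auto. field.
 - intros x _. apply (ex_derive_continuous (fun x => a + D * (x - u))). auto_derive. auto. }
 rewrite (is_RInt_unique _ _ _ _ H1).
 unfold minus, plus, opp; simpl. field.
Qed.

Lemma ex_RInt_cont f a b : (forall x, continuity_pt f x) -> ex_RInt f a b.
Proof. intros H. apply (ex_RInt_continuous (V:=R_CompleteNormedModule)). intros z _. apply continuity_pt_filterlim. apply H. Qed.

Lemma trap f u v M : u < v -> (forall x, continuity_pt f x) ->
  (forall x, u < x < v -> ex_derive f x /\ ex_derive (Derive f) x /\ Rabs (Derive (Derive f) x) <= M) ->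
  Rabs (RInt f u v - (v - u) * (f u + f v) / 2) <= M * (v - u)^3.
Proof.
 intros Huv Hc Hd.
 destruct (mvt_open f u v) as [xi [Hxi HD]]; [auto| intros; apply Hd; auto| intros; apply Hc|].
 set (D := Derive f xi) in *.
 assert (HM : 0 <= M). { destruct (Hd xi Hxi) as [_ [_ H]]. pose proof (Rabs_pos (Derive (Derive f) xi)). lra. }
 assert (Hd1 : forall x, u < x < v -> Rabs (Derive f x - D) <= M * (v - u)).
 { intros x Hx. destruct (Rle_dec x xi).
   - assert (H := lip_mvt (Derive f) x xi M r).
     rewrite Rabs_minus_sym. eapply Rle_trans; [apply H|].
     + intros y Hy. split; apply Hd; lra.
     + intros y Hy. apply cont_of_derive. apply Hd; lra.
     + apply Rmult_le_compat_l; lra.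
   - assert (H := lip_mvt (Derive f) xi x M (Rlt_le _ _ (Rnot_le_lt _ _ n))).
     eapply Rle_trans; [apply H|].
     + intros y Hy. split; apply Hd; lra.
     + intros y Hy. apply cont_of_derive. apply Hd; lra.
     + apply Rmult_le_compat_l; lra. }
 set (phi := fun x => f x - f u - D * (x - u)).
 assert (Hphid : forall x, u < x < v -> is_derive phi x (Derive f x - D)).
 { intros x Hx. unfold phi. auto_derive. apply Hd; auto. change (Derive (fun x0 => f x0) x) with (Derive f x). ring. }
 assert (Hphic : forall x, continuity_pt phi x).
 { intros x. unfold phi. apply continuity_pt_minus; [apply continuity_pt_minus|].
   apply Hc. apply continuity_pt_const. intros a b; auto.
   apply continuity_pt_mult. apply continuity_pt_const. intros a b; auto.
   apply continuity_pt_minus. apply derivable_continuous_pt, derivable_pt_id.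
   apply continuity_pt_const. intros a b; auto. }
 assert (Hphi : forall x, u <= x <= v -> Rabs (phi x) <= M * (v - u)^2).
 { intros x Hx.
   assert (H := lip_mvt phi u x (M * (v - u)) (proj1 Hx)).
   replace (phi x) with (phi x - phi u) by (unfold phi; ring).
   eapply Rle_trans; [apply H|].
   - intros y Hy. split. eexists; apply Hphid; lra.
     rewrite (is_derive_unique phi y (Derive f y - D)) by (apply Hphid; lra). apply Hd1; lra.
   - intros; apply Hphic.
   - replace (M * (v - u) ^ 2) with (M * (v - u) * (v - u)) by ring.
     apply Rmult_le_compat_l; [|lra]. apply Rmult_le_pos; lra. }
 assert (Hf : RInt f u v = RInt phi u v + RInt (fun x => f u + D * (x - u)) u v).
 { rewrite <- (RInt_plus phi (fun x => f u + D * (x - u))).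
   - apply RInt_ext. intros x _. unfold phi, plus; simpl. ring.
   - apply ex_RInt_cont. auto.
   - apply ex_RInt_cont. intros x. apply continuity_pt_plus. apply continuity_pt_const. intros a b; auto.
     apply continuity_pt_mult. apply continuity_pt_const. intros a b; auto.
     apply continuity_pt_minus. apply derivable_continuous_pt, derivable_pt_id.
     apply continuity_pt_const. intros a b; auto. }
 rewrite Hf, RInt_lin.
 assert (E : (v - u) * f u + D * (v - u) ^ 2 / 2 - (v - u) * (f u + f v) / 2 = 0)
   by (replace (f v) with (f u + D * (v - u)) by lra; field).
 set (I := RInt phi u v).
 assert (E2 : forall J : R, J + ((v - u) * f u + D * (v - u) ^ 2 / 2) - (v - u) * (f u + f v) / 2 = J) by (intros; lra).
 rewrite E2.
 replace (M * (v - u) ^ 3) with ((v - u) * (M * (v - u)^2)) by ring.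
 apply abs_RInt_le_const; [lra| apply ex_RInt_cont; auto| auto].
Qed.

Lemma crude (f : R -> R) L u v : 0 <= L -> 0 <= u <= v -> v <= 1 -> (forall x, continuity_pt f x) ->
  (forall x y, 0 <= x <= 1 -> 0 <= y <= 1 -> Rabs (f x - f y) <= L * Rabs (x - y)) ->
  Rabs (RInt f u v - (v - u) * (f u + f v) / 2) <= 2 * L * (v - u)^2.
Proof.
 intros HL Hu Hv Hc Hl.
 assert (E : RInt f u v - (v - u) * f u = RInt (fun t => f t - f u) u v).
 { symmetry. apply is_RInt_unique.
   apply (is_RInt_minus (V:=R_CompleteNormedModule) f (fun _ => f u)). apply RInt_correct; apply ex_RInt_cont; auto.
   apply (is_RInt_const (V:=R_CompleteNormedModule)). }
 assert (B1 : Rabs (RInt (fun t => f t - f u) u v) <= (v - u) * (L * (v - u))).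
 { apply abs_RInt_le_const; [lra| |].
   - apply (ex_RInt_minus (V:=R_NormedModule) f (fun _ => f u)). apply ex_RInt_cont; auto. apply ex_RInt_const.
   - intros t Ht. eapply Rle_trans; [apply Hl; lra|]. apply Rmult_le_compat_l; auto.
     rewrite Rabs_right; lra. }
 assert (B2 : Rabs (f v - f u) <= L * (v - u)).
 { eapply Rle_trans; [apply Hl; lra|]. rewrite Rabs_right; lra. }
 assert (E3 : forall J : R, J - (v - u) * (f u + f v) / 2 = (J - (v - u) * f u) - (v - u) * (f v - f u) / 2) by (intros; field).
 rewrite E3.
 rewrite E. eapply Rle_trans; [apply Rabs_triang|]. rewrite Rabs_Ropp.
 unfold Rdiv. rewrite Rabs_mult, Rabs_mult, (Rabs_right (v - u)) by lra.
 rewrite (Rabs_right (/2)) by lra.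
 assert ((v - u) * Rabs (f v - f u) <= (v - u) * (L * (v - u))) by (apply Rmult_le_compat_l; lra).
 assert (0 <= L * (v - u) * (v - u)) by (apply Rmult_le_pos; [apply Rmult_le_pos|]; lra).
 replace ((v - u) * Rabs (f v - f u) * / 2) with (/2 * ((v - u) * Rabs (f v - f u))) by ring.
 lra.
Qed.

Definition Icell (n k : nat) (x : R) : R :=
  if Rlt_dec (INR k / INR n) x then if Rlt_dec x (INR (S k) / INR n) then 1 else 0 else 0.

Lemma grid_lt n k : (0 < n)%nat -> INR k / INR n < INR (S k) / INR n.
Proof. intros Hn. assert (0 < INR n) by (apply lt_0_INR; auto). rewrite S_INR.
 unfold Rdiv. apply Rmult_lt_compat_r. apply Rinv_0_lt_compat; auto. lra. Qed.

Lemma count_cells n x m : (0 < n)%nat ->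
  rsum m (fun k => Icell n k x) <= if Rlt_dec x (INR m / INR n) then 1 else 0.
Proof. intros Hn. induction m.
 - simpl. destruct Rlt_dec; lra.
 - simpl rsum. pose proof (grid_lt n m Hn).
   unfold Icell at 2. destruct (Rlt_dec x (INR m / INR n)) as [h|h] in IHm.
   + destruct (Rlt_dec (INR m / INR n) x); [lra|]. destruct (Rlt_dec x (INR (S m) / INR n)); lra.
   + destruct (Rlt_dec (INR m / INR n) x); [|destruct (Rlt_dec x (INR (S m) / INR n)); lra].
     destruct (Rlt_dec x (INR (S m) / INR n)); lra.
Qed.

Lemma count_cells1 n x m : (0 < n)%nat -> rsum m (fun k => Icell n k x) <= 1.
Proof. intros Hn. eapply Rle_trans; [apply count_cells; auto|]. destruct Rlt_dec; lra. Qed.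

Lemma Icell_nonneg n k x : 0 <= Icell n k x.
Proof. unfold Icell. repeat destruct Rlt_dec; lra. Qed.

Lemma sum_trap (f : R -> R) (r : nat) (c : nat -> R) L K n :
  (0 < n)%nat -> 0 <= K -> 0 <= L ->
  (forall x, continuity_pt f x) ->
  (forall x y, 0 <= x <= 1 -> 0 <= y <= 1 -> Rabs (f x - f y) <= L * Rabs (x - y)) ->
  (forall u v, 0 <= u -> u < v -> v <= 1 -> (forall j, (j < r)%nat -> ~ (u < c j < v)) ->
     Rabs (RInt f u v - (v - u) * (f u + f v) / 2) <= K * (v - u)^3) ->
  Rabs (rsum (n - 1) (fun k => f (INR (S k) / INR n)) - INR n * RInt f 0 1 + (f 0 + f 1) / 2)
    <= (K + 2 * L * INR r) / INR n.
Proof.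
 intros Hn HK HL Hc Hl Ht.
 assert (Hnp : 0 < INR n) by (apply lt_0_INR; auto).
 set (x := fun k => INR k / INR n).
 assert (Hx0 : x O = 0) by (unfold x; simpl; field; lra).
 assert (Hxn : x n = 1) by (unfold x; field; lra).
 assert (Hdx : forall k, x (S k) - x k = 1 / INR n) by (intros; unfold x; rewrite S_INR; field; lra).
 assert (Hxr : forall k, (k <= n)%nat -> 0 <= x k <= 1).
 { intros k Hk. unfold x. split. apply Rmult_le_pos. apply pos_INR. left; apply Rinv_0_lt_compat; auto.
   apply le_INR in Hk. unfold Rdiv. apply (Rmult_le_reg_r (INR n)); auto. rewrite Rmult_assoc, Rinv_l; lra. }
 set (e := fun k => RInt f (x k) (x (S k)) - (x (S k) - x k) * (f (x k) + f (x (S k))) / 2).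
 assert (HA : forall m, rsum m (fun k => RInt f (x k) (x (S k))) = RInt f 0 (x m)).
 { induction m; simpl rsum. rewrite Hx0, RInt_point. reflexivity.
   rewrite IHm. rewrite <- (RInt_Chasles f 0 (x m) (x (S m))); try apply ex_RInt_cont; auto. }
 destruct n as [|m]; [lia|].
 replace (S m - 1)%nat with m by lia.
 assert (HB : rsum (S m) (fun k => (f (x k) + f (x (S k))) / 2) = rsum m (fun k => f (x (S k))) + (f 0 + f 1) / 2).
 { unfold Rdiv. rewrite (rsum_ext _ _ (fun k => / 2 * f (x k) + / 2 * f (x (S k)))) by (intros; field).
   rewrite rsum_plus, !rsum_scal, rsum_shift. simpl rsum at 2. rewrite Hx0, Hxn. field. }
 assert (HT : rsum m (fun k => f (INR (S k) / INR (S m))) - INR (S m) * RInt f 0 1 + (f 0 + f 1) / 2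
            = - INR (S m) * rsum (S m) e).
 { unfold e. rewrite rsum_minus. rewrite HA, Hxn.
   assert (HC : rsum (S m) (fun k => (x (S k) - x k) * (f (x k) + f (x (S k))) / 2)
      = 1 / INR (S m) * rsum (S m) (fun k => (f (x k) + f (x (S k))) / 2))
     by (rewrite <- rsum_scal; apply rsum_ext; intros; rewrite Hdx; field; lra).
   rewrite HC, HB. fold x. unfold x at 1. field. lra. }
 rewrite HT. set (N := INR (S m)) in *.
 assert (Hek : forall k, (k < S m)%nat -> Rabs (e k) <= K / N^3 + 2 * L / N^2 * rsum r (fun j => Icell (S m) k (c j))).
 { intros k Hk. assert (Hr0 : 0 <= rsum r (fun j => Icell (S m) k (c j))) by (apply rsum_nonneg; intros; apply Icell_nonneg).
   assert (Hk1 : 0 <= x k <= 1) by (apply Hxr; lia). assert (Hk2 : 0 <= x (S k) <= 1) by (apply Hxr; lia).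
   assert (Hk3 := Hdx k). assert (Hpos : 0 < 1 / N) by (unfold Rdiv; rewrite Rmult_1_l; apply Rinv_0_lt_compat; auto).
   assert (HN2 : 0 < 2 * L / N^2 * rsum r (fun j => Icell (S m) k (c j)) \/ 0 <= 2 * L / N^2 * rsum r (fun j => Icell (S m) k (c j))).
   { right. apply Rmult_le_pos; auto. unfold Rdiv. apply Rmult_le_pos. lra. left; apply Rinv_0_lt_compat. apply pow_lt; auto. }
   destruct (classic (forall j, (j < r)%nat -> ~ (x k < c j < x (S k)))) as [Hreg|Hirr].
   - assert (H1 := Ht (x k) (x (S k)) (proj1 Hk1) ltac:(lra) (proj2 Hk2) Hreg).
     fold (e k) in H1. rewrite Hk3 in H1.
     replace (K * (1 / N) ^ 3) with (K / N^3) in H1 by (field; lra). lra.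
   - apply not_all_ex_not in Hirr. destruct Hirr as [j Hj].
     assert (Hjr : (j < r)%nat) by (destruct (Nat.lt_ge_cases j r); auto; exfalso; apply Hj; intros; lia).
     assert (Hjc : x k < c j < x (S k)) by (apply NNPP; intros Hn'; apply Hj; intros; auto).
     assert (HI : Icell (S m) k (c j) = 1).
     { unfold Icell. change (INR (S m)) with N. unfold x in Hjc. destruct Rlt_dec; [|lra]. destruct Rlt_dec; lra. }
     assert (HI2 : 1 <= rsum r (fun j => Icell (S m) k (c j))).
     { rewrite <- HI. apply (rsum_term_le r (fun j => Icell (S m) k (c j))); auto. intros; apply Icell_nonneg. }
     assert (H1 := crude f L (x k) (x (S k)) HL ltac:(lra) (proj2 Hk2) Hc Hl).
     fold (e k) in H1. rewrite Hk3 in H1.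
     assert (HKN : 0 <= K / N^3) by (unfold Rdiv; apply Rmult_le_pos; auto; left; apply Rinv_0_lt_compat, pow_lt; auto).
     assert (2 * L * (1 / N)^2 <= 2 * L / N^2 * rsum r (fun j => Icell (S m) k (c j))).
     { replace (2 * L * (1 / N)^2) with (2 * L / N^2 * 1) by (field; lra).
       apply Rmult_le_compat_l; auto. unfold Rdiv. apply Rmult_le_pos. lra. left; apply Rinv_0_lt_compat, pow_lt; auto. }
     lra. }
 assert (Hsum : rsum (S m) (fun k => Rabs (e k)) <= K / N^2 + 2 * L / N^2 * INR r).
 { eapply Rle_trans. apply rsum_le. apply Hek.
   rewrite rsum_plus, rsum_const, rsum_scal, rsum_swap.
   assert (rsum r (fun j => rsum (S m) (fun k => Icell (S m) k (c j))) <= INR r).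
   { rewrite <- (Rmult_1_r (INR r)), <- rsum_const. apply rsum_le. intros. apply count_cells1. lia. }
   change (INR (S m)) with N. replace (N * (K / N^3)) with (K / N^2) by (field; lra).
   apply Rplus_le_compat_l. apply Rmult_le_compat_l; auto.
   unfold Rdiv. apply Rmult_le_pos. lra. left; apply Rinv_0_lt_compat, pow_lt; auto. }
 rewrite Rabs_mult, Rabs_Ropp, Rabs_right by lra.
 eapply Rle_trans. apply Rmult_le_compat_l. lra. eapply Rle_trans. apply rsum_abs. apply Hsum.
 right. field. lra.
Qed.

Lemma ball_R (a d y : R) : ball a d y <-> Rabs (y - a) < d.
Proof. unfold ball; simpl; unfold AbsRing_ball, abs, minus, plus, opp; simpl. tauto. Qed.

Lemma rc_eps (f : R -> R) a l : filterlim f (at_right a) (locally l) ->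
  forall eps, 0 < eps -> exists d, 0 < d /\ forall y, a < y < a + d -> Rabs (f y - l) < eps.
Proof. intros H eps Heps. destruct (proj1 (filterlim_locally f l) H (mkposreal eps Heps)) as [d Hd].
 exists d. split. apply cond_pos. intros y Hy. apply ball_R. apply Hd; [|lra]. apply ball_R.
 rewrite Rabs_right; lra. Qed.

Lemma lc_eps (f : R -> R) a l : filterlim f (at_left a) (locally l) ->
  forall eps, 0 < eps -> exists d, 0 < d /\ forall y, a - d < y < a -> Rabs (f y - l) < eps.
Proof. intros H eps Heps. destruct (proj1 (filterlim_locally f l) H (mkposreal eps Heps)) as [d Hd].
 exists d. split. apply cond_pos. intros y Hy. apply ball_R. apply Hd; [|lra]. apply ball_R.
 rewrite Rabs_left; lra. Qed.

Lemma lip_base (f : R -> R) L a b : 0 <= L -> a <= b ->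
  (forall x, a < x < b -> ex_derive f x /\ Rabs (Derive f x) <= L) ->
  (a < b -> filterlim f (at_right a) (locally (f a))) ->
  (a < b -> filterlim f (at_left b) (locally (f b))) ->
  Rabs (f b - f a) <= L * (b - a).
Proof. intros HL Hab Hd Hra Hlb. destruct (Req_dec a b) as [<-|Hne].
 { replace (f a - f a) with 0 by ring. rewrite Rabs_R0. lra. }
 assert (Hlt : a < b) by lra.
 apply Rle_plus_epsilon. intros eps Heps.
 destruct (rc_eps f a (f a) (Hra Hlt) (eps/2) ltac:(lra)) as [d1 [Hd1 H1]].
 destruct (lc_eps f b (f b) (Hlb Hlt) (eps/2) ltac:(lra)) as [d2 [Hd2 H2]].
 set (a' := a + Rmin d1 ((b - a) / 2) / 2).
 set (b' := b - Rmin d2 ((b - a) / 2) / 2).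
 assert (Ha1 : 0 < Rmin d1 ((b - a) / 2)) by (apply Rmin_glb_lt; lra).
 assert (Ha2 : Rmin d1 ((b - a) / 2) <= d1) by apply Rmin_l.
 assert (Ha3 : Rmin d1 ((b - a) / 2) <= (b - a) / 2) by apply Rmin_r.
 assert (Hb1 : 0 < Rmin d2 ((b - a) / 2)) by (apply Rmin_glb_lt; lra).
 assert (Hb2 : Rmin d2 ((b - a) / 2) <= d2) by apply Rmin_l.
 assert (Hb3 : Rmin d2 ((b - a) / 2) <= (b - a) / 2) by apply Rmin_r.
 assert (Hm := lip_mvt f a' b' L ltac:(unfold a', b'; lra)).
 assert (Hm' : Rabs (f b' - f a') <= L * (b' - a')).
 { apply Hm. intros; apply Hd; unfold a', b' in *; lra.
   intros; apply cont_of_derive; apply Hd; unfold a', b' in *; lra. }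
 assert (E1 : Rabs (f a' - f a) < eps / 2) by (apply H1; unfold a'; lra).
 assert (E2 : Rabs (f b' - f b) < eps / 2) by (apply H2; unfold b'; lra).
 assert (L * (b' - a') <= L * (b - a)) by (apply Rmult_le_compat_l; unfold a', b'; lra).
 replace (f b - f a) with ((f b' - f a') + (f b - f b') + (f a' - f a)) by ring.
 pose proof (Rabs_triang ((f b' - f a') + (f b - f b')) (f a' - f a)) as T1.
 pose proof (Rabs_triang (f b' - f a') (f b - f b')) as T2. rewrite (Rabs_minus_sym (f b)) in T2.
 lra.
Qed.

Lemma lip_bad (f : R -> R) L (c : nat -> R) r : 0 <= L -> forall a b, a <= b ->
  (forall x, a < x < b -> (forall j, (j < r)%nat -> x <> c j) -> ex_derive f x /\ Rabs (Derive f x) <= L) ->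
  (forall x, a <= x < b -> filterlim f (at_right x) (locally (f x))) ->
  (forall x, a < x <= b -> filterlim f (at_left x) (locally (f x))) ->
  Rabs (f b - f a) <= L * (b - a).
Proof. intros HL. induction r; intros a b Hab Hd Hr Hl.
 - apply lip_base; auto. intros x Hx. apply Hd; auto. intros; lia.
   intros; apply Hr; lra. intros; apply Hl; lra.
 - destruct (classic (a < c r < b)) as [Hin|Hout].
   + assert (A1 : Rabs (f (c r) - f a) <= L * (c r - a)).
     { apply IHr; try lra. intros x Hx Hj. apply Hd. lra. intros j Hj'.
       destruct (Nat.eq_dec j r) as [->|]; [lra|]. apply Hj; lia.
       intros; apply Hr; lra. intros; apply Hl; lra. }
     assert (A2 : Rabs (f b - f (c r)) <= L * (b - c r)).
     { apply IHr; try lra. intros x Hx Hj. apply Hd. lra. intros j Hj'.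
       destruct (Nat.eq_dec j r) as [->|]; [lra|]. apply Hj; lia.
       intros; apply Hr; lra. intros; apply Hl; lra. }
     replace (f b - f a) with ((f b - f (c r)) + (f (c r) - f a)) by ring.
     eapply Rle_trans. apply Rabs_triang. lra.
   + apply IHr; auto. intros x Hx Hj. apply Hd; auto. intros j Hj'.
     destruct (Nat.eq_dec j r) as [->|]; [lra|]. apply Hj; lia.
Qed.

Record Hyps (g : R -> R) (r : nat) (c gm gp : nat -> R) (H : nat -> R -> R) (M : R) : Prop := {
  hc01 : forall j, (j < r)%nat -> 0 < c j < 1;
  hinj : forall i j, (i < r)%nat -> (j < r)%nat -> c i = c j -> i = j;
  hd : forall x, regular_pt r c x -> ex_derive g x /\ ex_derive (Derive g) x;
  hbd : forall x, regular_pt r c x -> Rabs (Derive (Derive g) x) <= M;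
  h0 : filterlim g (at_right 0) (locally (g 0));
  h1 : filterlim g (at_left 1) (locally (g 1));
  hgm : forall j, (j < r)%nat -> filterlim g (at_left (c j)) (locally (gm j));
  hgp : forall j, (j < r)%nat -> filterlim g (at_right (c j)) (locally (gp j));
  hlo : forall j x, x < c j -> H j x = 0;
  hhi : forall j x, c j < x -> H j x = 1;
  hat : forall j, (j < r)%nat -> g (c j) = gm j + (gp j - gm j) * H j (c j)
}.

Definition Phi (r : nat) (gm gp : nat -> R) (H : nat -> R -> R) (x : R) : R :=
  rsum r (fun j => (gp j - gm j) * H j x).

Definition sides (r : nat) (c : nat -> R) (x y : R) : Prop :=
  forall j, (j < r)%nat -> (x < c j -> y < c j) /\ (c j < x -> c j < y).

Lemma loc_side (r : nat) (c : nat -> R) x : (forall j, (j < r)%nat -> x <> c j) -> locally x (sides r c x).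
Proof. induction r; intros Hx.
 - apply filter_forall. intros y j Hj; lia.
 - assert (IH : locally x (sides r c x)) by (apply IHr; intros; apply Hx; lia).
   assert (Hj : locally x (fun y => (x < c r -> y < c r) /\ (c r < x -> c r < y))).
   { assert (Hp : 0 < Rabs (c r - x)) by (apply Rabs_pos_lt; intros E; apply (Hx r); lia || lra).
     exists (mkposreal _ Hp). intros y Hy. apply ball_R in Hy.
     assert (Hy' : Rabs (y - x) < Rabs (c r - x)) by exact Hy. clear Hy. rename Hy' into Hy.
     apply Rabs_def2 in Hy. destruct Hy as [Hy1 Hy2]. split; intros Hc.
     + rewrite (Rabs_right (c r - x)) in Hy1, Hy2 by lra. lra.
     + rewrite (Rabs_left (c r - x)) in Hy1, Hy2 by lra. lra. }
   eapply filter_imp; [|apply (filter_and _ _ IH Hj)].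
   intros y [A B] j Hjr. destruct (Nat.eq_dec j r) as [->|]; auto. apply A; lia.
Qed.

Lemma loc_unit x : 0 < x < 1 -> locally x (fun y => 0 < y < 1).
Proof. intros Hx. assert (Hp : 0 < Rmin x (1 - x)) by (apply Rmin_glb_lt; lra).
 exists (mkposreal _ Hp). intros y Hy. apply ball_R in Hy.
 assert (Hy' : Rabs (y - x) < Rmin x (1 - x)) by exact Hy. clear Hy. rename Hy' into Hy.
 pose proof (Rmin_l x (1 - x)). pose proof (Rmin_r x (1 - x)). apply Rabs_def2 in Hy. destruct Hy. lra. Qed.

Lemma H_side g r c gm gp H M (Hy : Hyps g r c gm gp H M) x y j : (j < r)%nat -> x <> c j ->
  (x < c j -> y < c j) /\ (c j < x -> c j < y) -> H j y = H j x.
Proof. intros Hj Hne [A B]. destruct (Rlt_dec x (c j)).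
 - rewrite !(hlo _ _ _ _ _ _ _ Hy); auto.
 - rewrite !(hhi _ _ _ _ _ _ _ Hy); auto; lra. Qed.

Lemma shift_der (F G : R -> R) x k : locally x (fun y => F y = G y + k) -> ex_derive G x ->
  ex_derive F x /\ Derive F x = Derive G x.
Proof. intros Hl Hd.
 assert (E1 : ex_derive (fun y => G y + k) x) by (auto_derive; auto).
 assert (E2 : Derive (fun y => G y + k) x = Derive G x).
 { apply is_derive_unique. auto_derive; auto. rewrite ?Rmult_1_r, ?Rmult_1_l, ?Rplus_0_r; reflexivity. }
 assert (Hl' : locally x (fun y => G y + k = F y)) by (eapply filter_imp; [|apply Hl]; intros; auto).
 split. apply (ex_derive_ext_loc (fun y => G y + k) F x Hl' E1). transitivity (Derive (fun y => G y + k) x); [apply Derive_ext_loc; auto | exact E2].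
Qed.

Lemma der_transfer g r c gm gp H M (Hy : Hyps g r c gm gp H M) (F : R -> R) x :
  regular_pt r c x -> (forall y, 0 < y < 1 -> F y = g y - Phi r gm gp H y) ->
  ex_derive F x /\ Derive F x = Derive g x /\ ex_derive (Derive F) x /\ Derive (Derive F) x = Derive (Derive g) x.
Proof. intros Hx HF.
 set (good := fun y => (0 < y < 1) /\ sides r c x y).
 assert (LG : locally x good).
 { apply filter_and. apply loc_unit, Hx. apply loc_side. intros j Hj E; apply (proj2 Hx j Hj); auto. }
 assert (Hgood : forall y, good y -> F y = g y + - Phi r gm gp H x /\ regular_pt r c y).
 { intros y [Hy1 Hy2]. split.
   - rewrite HF by auto. unfold Phi. rewrite (rsum_ext _ _ (fun j => (gp j - gm j) * H j x)). ring.
     intros j Hj. rewrite (H_side g r c gm gp H M Hy x y j); auto. apply (proj2 Hx j Hj).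
   - split; auto. intros j Hj E. destruct (Hy2 j Hj) as [A B]. destruct (Rlt_dec x (c j)).
     + specialize (A r0); lra.
     + assert (c j < x) by (destruct (Req_dec x (c j)); [exfalso; apply (proj2 Hx j Hj); auto| lra]).
       specialize (B H0); lra. }
 assert (L1 : locally x (fun y => F y = g y + - Phi r gm gp H x)) by (eapply filter_imp; [|apply LG]; intros y Hg; apply Hgood; auto).
 destruct (shift_der F g x _ L1 (proj1 (hd _ _ _ _ _ _ _ Hy x Hx))) as [D1 D2].
 assert (L2 : locally x (fun y => Derive F y = Derive g y)).
 { eapply filter_imp; [|apply (filter_and _ _ LG (locally_locally _ _ LG))].
   intros y [Gy LGy]. apply (shift_der F g y (- Phi r gm gp H x)).
   eapply filter_imp; [|apply LGy]; intros z Hz; apply Hgood; auto.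
   apply (hd _ _ _ _ _ _ _ Hy). apply Hgood; auto. }
 assert (L2' : locally x (fun y => Derive g y = Derive F y)) by (eapply filter_imp; [|apply L2]; intros; auto).
 repeat split; auto.
 eapply ex_derive_ext_loc; [apply L2'|]. apply (hd _ _ _ _ _ _ _ Hy x Hx).
 apply Derive_ext_loc. auto.
Qed.

Definition ind (b : bool) : R := if b then 1 else 0.

Lemma lim_shift {F : (R -> Prop) -> Prop} {FF : Filter F} (g Ph : R -> R) l V :
  filterlim g F (locally l) -> F (fun y => Ph y = V) -> filterlim (fun y => g y - Ph y) F (locally (l - V)).
Proof. intros Hg HV. apply filterlim_locally. intros eps.
 eapply filter_imp; [|apply (filter_and _ _ (proj1 (filterlim_locally g l) Hg eps) HV)].
 intros y [A B]. apply ball_R. apply ball_R in A. rewrite B.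
 replace (g y - V - (l - V)) with (g y - l) by ring. exact A. Qed.

Lemma Phi_right g r c gm gp H M (Hy : Hyps g r c gm gp H M) p m :
  at_right p (fun y => rsum m (fun j => (gp j - gm j) * H j y) =
                       rsum m (fun j => (gp j - gm j) * (if Rle_dec (c j) p then 1 else 0))).
Proof. induction m.
 - apply filter_forall. reflexivity.
 - assert (Hj : at_right p (fun y => H m y = if Rle_dec (c m) p then 1 else 0)).
   { destruct (Rle_dec (c m) p).
     + exists (mkposreal 1 Rlt_0_1). intros y _ Hy'. apply (hhi _ _ _ _ _ _ _ Hy). lra.
     + assert (Hp : 0 < c m - p) by lra. exists (mkposreal _ Hp). intros y Hb _.
       apply ball_R in Hb. assert (Hb' : Rabs (y - p) < c m - p) by exact Hb.
       apply Rabs_def2 in Hb'. apply (hlo _ _ _ _ _ _ _ Hy). lra. }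
   eapply filter_imp; [|apply (filter_and _ _ IHm Hj)]. intros y [A B]. simpl. rewrite A, B. reflexivity.
Qed.

Lemma Phi_left g r c gm gp H M (Hy : Hyps g r c gm gp H M) p m :
  at_left p (fun y => rsum m (fun j => (gp j - gm j) * H j y) =
                       rsum m (fun j => (gp j - gm j) * (if Rlt_dec (c j) p then 1 else 0))).
Proof. induction m.
 - apply filter_forall. reflexivity.
 - assert (Hj : at_left p (fun y => H m y = if Rlt_dec (c m) p then 1 else 0)).
   { destruct (Rlt_dec (c m) p).
     + assert (Hp : 0 < p - c m) by lra. exists (mkposreal _ Hp). intros y Hb _.
       apply ball_R in Hb. assert (Hb' : Rabs (y - p) < p - c m) by exact Hb.
       apply Rabs_def2 in Hb'. apply (hhi _ _ _ _ _ _ _ Hy). lra.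
     + exists (mkposreal 1 Rlt_0_1). intros y _ Hy'. apply (hlo _ _ _ _ _ _ _ Hy). lra. }
   eapply filter_imp; [|apply (filter_and _ _ IHm Hj)]. intros y [A B]. simpl. rewrite A, B. reflexivity.
Qed.

Definition sfun g r gm gp H := fun y => g y - Phi r gm gp H y.

Lemma Phi_noc g r c gm gp H M (Hy : Hyps g r c gm gp H M) p :
  (forall j, (j < r)%nat -> p <> c j) ->
  rsum r (fun j => (gp j - gm j) * (if Rle_dec (c j) p then 1 else 0)) = Phi r gm gp H p /\
  rsum r (fun j => (gp j - gm j) * (if Rlt_dec (c j) p then 1 else 0)) = Phi r gm gp H p.
Proof. intros Hp. unfold Phi. split; apply rsum_ext; intros j Hj; specialize (Hp j Hj);
 destruct (Rlt_dec p (c j)); [rewrite (hlo _ _ _ _ _ _ _ Hy) by auto| rewrite (hhi _ _ _ _ _ _ _ Hy) by lra|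
   rewrite (hlo _ _ _ _ _ _ _ Hy) by auto| rewrite (hhi _ _ _ _ _ _ _ Hy) by lra];
 repeat destruct Rle_dec; repeat destruct Rlt_dec; try lra.
Qed.

Lemma RC_s g r c gm gp H M (Hy : Hyps g r c gm gp H M) x : 0 <= x < 1 ->
  filterlim (sfun g r gm gp H) (at_right x) (locally (sfun g r gm gp H x)).
Proof. intros Hx. unfold sfun.
 destruct (classic (exists j, (j < r)%nat /\ x = c j)) as [[j [Hj ->]]|Hno].
 - assert (HL := lim_shift g (Phi r gm gp H) _ _ (hgp _ _ _ _ _ _ _ Hy j Hj) (Phi_right g r c gm gp H M Hy (c j) r)).
   match goal with |- filterlim _ _ (locally ?a) => replace a with
     (gp j - rsum r (fun j0 => (gp j0 - gm j0) * (if Rle_dec (c j0) (c j) then 1 else 0))); auto end.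
   rewrite (hat _ _ _ _ _ _ _ Hy j Hj). unfold Phi.
   assert (E : rsum r (fun j0 => (gp j0 - gm j0) * (if Rle_dec (c j0) (c j) then 1 else 0)) -
               rsum r (fun j0 => (gp j0 - gm j0) * H j0 (c j)) = (gp j - gm j) * (1 - H j (c j))).
   { rewrite <- rsum_minus. rewrite (rsum_single r _ j Hj).
     - destruct Rle_dec; [ring| lra].
     - intros k Hk Hkj. assert (c k <> c j) by (intros E; apply Hkj; apply (hinj _ _ _ _ _ _ _ Hy); auto).
       destruct (Rlt_dec (c k) (c j)).
       + rewrite (hhi _ _ _ _ _ _ _ Hy) by auto. destruct Rle_dec; [ring| lra].
       + rewrite (hlo _ _ _ _ _ _ _ Hy) by lra. destruct Rle_dec; [lra| ring]. }
   lra.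
 - assert (Hnc : forall j, (j < r)%nat -> x <> c j) by (intros j Hj E; apply Hno; eauto).
   assert (Hg : filterlim g (at_right x) (locally (g x))).
   { destruct (Req_dec x 0) as [->|Hx0]. apply (h0 _ _ _ _ _ _ _ Hy).
     apply (filterlim_filter_le_1 _ (filter_le_within _)).
     apply (ex_derive_continuous g x). apply (hd _ _ _ _ _ _ _ Hy). split; [lra|]. auto. }
   assert (HL := lim_shift g (Phi r gm gp H) _ _ Hg (Phi_right g r c gm gp H M Hy x r)).
   rewrite (proj1 (Phi_noc g r c gm gp H M Hy x Hnc)) in HL. exact HL.
Qed.

Lemma LC_s g r c gm gp H M (Hy : Hyps g r c gm gp H M) x : 0 < x <= 1 ->
  filterlim (sfun g r gm gp H) (at_left x) (locally (sfun g r gm gp H x)).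
Proof. intros Hx. unfold sfun.
 destruct (classic (exists j, (j < r)%nat /\ x = c j)) as [[j [Hj ->]]|Hno].
 - assert (HL := lim_shift g (Phi r gm gp H) _ _ (hgm _ _ _ _ _ _ _ Hy j Hj) (Phi_left g r c gm gp H M Hy (c j) r)).
   match goal with |- filterlim _ _ (locally ?a) => replace a with
     (gm j - rsum r (fun j0 => (gp j0 - gm j0) * (if Rlt_dec (c j0) (c j) then 1 else 0))); auto end.
   rewrite (hat _ _ _ _ _ _ _ Hy j Hj). unfold Phi.
   assert (E : rsum r (fun j0 => (gp j0 - gm j0) * (if Rlt_dec (c j0) (c j) then 1 else 0)) -
               rsum r (fun j0 => (gp j0 - gm j0) * H j0 (c j)) = (gp j - gm j) * (0 - H j (c j))).
   { rewrite <- rsum_minus. rewrite (rsum_single r _ j Hj).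
     - destruct Rlt_dec; [lra| ring].
     - intros k Hk Hkj. assert (c k <> c j) by (intros E; apply Hkj; apply (hinj _ _ _ _ _ _ _ Hy); auto).
       destruct (Rlt_dec (c k) (c j)).
       + rewrite (hhi _ _ _ _ _ _ _ Hy) by auto. ring.
       + rewrite (hlo _ _ _ _ _ _ _ Hy) by lra. ring. }
   lra.
 - assert (Hnc : forall j, (j < r)%nat -> x <> c j) by (intros j Hj E; apply Hno; eauto).
   assert (Hg : filterlim g (at_left x) (locally (g x))).
   { destruct (Req_dec x 1) as [->|Hx0]. apply (h1 _ _ _ _ _ _ _ Hy).
     apply (filterlim_filter_le_1 _ (filter_le_within _)).
     apply (ex_derive_continuous g x). apply (hd _ _ _ _ _ _ _ Hy). split; [lra|]. auto. }
   assert (HL := lim_shift g (Phi r gm gp H) _ _ Hg (Phi_left g r c gm gp H M Hy x r)).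
   rewrite (proj2 (Phi_noc g r c gm gp H M Hy x Hnc)) in HL. exact HL.
Qed.

Lemma fin_max (f : nat -> R) x p0 m : p0 < x -> exists p, p0 <= p < x /\
  (p = p0 \/ exists j, (j < m)%nat /\ p = f j) /\ forall j, (j < m)%nat -> f j < x -> f j <= p.
Proof. intros H0. induction m.
 - exists p0. split; [lra|]. split; auto. intros; lia.
 - destruct IHm as [p [A [B C]]].
   destruct (Rlt_dec (f m) x) as [h|h]; [destruct (Rle_dec (f m) p) as [h'|h']|].
   + exists p. split; auto. split. destruct B as [B|[j [Hj E]]]; auto. right; exists j; split; auto; lia.
     intros j Hj Hf. destruct (Nat.eq_dec j m) as [->|]; auto. apply C; auto; lia.
   + exists (f m). split; [lra|]. split. right; exists m; split; auto.
     intros j Hj Hf. destruct (Nat.eq_dec j m) as [->|]; [lra|]. assert (f j <= p) by (apply C; auto; lia). lra.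
   + exists p. split; auto. split. destruct B as [B|[j [Hj E]]]; auto. right; exists j; split; auto; lia.
     intros j Hj Hf. destruct (Nat.eq_dec j m) as [->|]; [lra|]. apply C; auto; lia.
Qed.

Lemma fin_min (f : nat -> R) x q0 m : x < q0 -> exists q, x < q <= q0 /\
  (q = q0 \/ exists j, (j < m)%nat /\ q = f j) /\ forall j, (j < m)%nat -> x < f j -> q <= f j.
Proof. intros H0. destruct (fin_max (fun j => - f j) (- x) (- q0) m) as [p [A [B C]]]; [lra|].
 exists (- p). split; [lra|]. split.
 - destruct B as [B|[j [Hj E]]]; [left; lra| right; exists j; split; auto; lra].
 - intros j Hj Hf. assert (- f j <= p) by (apply C; auto; lra). lra.
Qed.

Definition pt (r : nat) (c : nat -> R) (i : nat) : R :=
  if Nat.ltb i r then c i else if Nat.eqb i r then 0 else 1.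

Lemma dg_bound g r c gm gp H M (Hy : Hyps g r c gm gp H M) :
  forall x, regular_pt r c x -> Rabs (Derive g x) <=
    M + rsum (S (S r)) (fun a => rsum (S (S r)) (fun b => Rabs (Derive g ((pt r c a + pt r c b) / 2)))).
Proof. intros x Hx. destruct Hx as [Hx01 Hxc] eqn:Hxe.
 assert (HM : 0 <= M) by (pose proof (hbd _ _ _ _ _ _ _ Hy x Hx); pose proof (Rabs_pos (Derive (Derive g) x)); lra).
 destruct (fin_max c x 0 r) as [p [Pa [Pb Pc]]]; [lra|].
 destruct (fin_min c x 1 r) as [q [Qa [Qb Qc]]]; [lra|].
 assert (Hreg : forall y, p < y < q -> regular_pt r c y).
 { intros y Hyy. split; [lra|]. intros j Hj E. destruct (Rlt_dec (c j) x).
   - assert (c j <= p) by auto. lra.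
   - assert (x < c j) by (destruct (Req_dec x (c j)); [exfalso; apply (Hxc j Hj); auto| lra]).
     assert (q <= c j) by auto. lra. }
 set (m := (p + q) / 2).
 assert (Hdiff : Rabs (Derive g x - Derive g m) <= M).
 { destruct (Rle_dec x m).
   - rewrite Rabs_minus_sym. eapply Rle_trans. apply (lip_mvt (Derive g) x m M r0).
     + intros y Hy'. split. apply (hd _ _ _ _ _ _ _ Hy). apply Hreg; unfold m in *; lra.
       apply (hbd _ _ _ _ _ _ _ Hy). apply Hreg; unfold m in *; lra.
     + intros y Hy'. apply cont_of_derive. apply (hd _ _ _ _ _ _ _ Hy). apply Hreg; unfold m in *; lra.
     + assert (m - x <= 1) by (unfold m; lra). nra.
   - eapply Rle_trans. apply (lip_mvt (Derive g) m x M). lra.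
     + intros y Hy'. split. apply (hd _ _ _ _ _ _ _ Hy). apply Hreg; unfold m in *; lra.
       apply (hbd _ _ _ _ _ _ _ Hy). apply Hreg; unfold m in *; lra.
     + intros y Hy'. apply cont_of_derive. apply (hd _ _ _ _ _ _ _ Hy). apply Hreg; unfold m in *; lra.
     + assert (x - m <= 1) by (unfold m; lra). nra. }
 assert (Ha : exists a, (a < S (S r))%nat /\ pt r c a = p).
 { destruct Pb as [->|[j [Hj ->]]].
   - exists r. split. lia. unfold pt. rewrite Nat.ltb_irrefl, Nat.eqb_refl. reflexivity.
   - exists j. split. lia. unfold pt. apply Nat.ltb_lt in Hj. rewrite Hj. reflexivity. }
 assert (Hb : exists b, (b < S (S r))%nat /\ pt r c b = q).
 { destruct Qb as [->|[j [Hj ->]]].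
   - exists (S r). split. lia. unfold pt.
     replace (Nat.ltb (S r) r) with false by (symmetry; apply Nat.ltb_ge; lia).
     replace (Nat.eqb (S r) r) with false by (symmetry; apply Nat.eqb_neq; lia). reflexivity.
   - exists j. split. lia. unfold pt. apply Nat.ltb_lt in Hj. rewrite Hj. reflexivity. }
 destruct Ha as [a [Ha1 Ha2]]. destruct Hb as [b [Hb1 Hb2]].
 assert (T : Rabs (Derive g m) <= rsum (S (S r)) (fun a => rsum (S (S r)) (fun b => Rabs (Derive g ((pt r c a + pt r c b) / 2))))).
 { eapply Rle_trans; [|apply (rsum_term_le _ (fun a => rsum (S (S r)) (fun b => Rabs (Derive g ((pt r c a + pt r c b) / 2)))) a)].
   - eapply Rle_trans; [|apply (rsum_term_le _ (fun b => Rabs (Derive g ((pt r c a + pt r c b) / 2))) b)].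
     + rewrite Ha2, Hb2. unfold m. lra.
     + intros; apply Rabs_pos.
     + auto.
   - intros; apply rsum_nonneg; intros; apply Rabs_pos.
   - auto. }
 replace (Derive g x) with ((Derive g x - Derive g m) + Derive g m) by ring.
 eapply Rle_trans. apply Rabs_triang. lra.
Qed.

Lemma is_RInt_H g r c gm gp H M (Hy : Hyps g r c gm gp H M) j : (j < r)%nat ->
  is_RInt (V:=R_CompleteNormedModule) (H j) 0 1 (1 - c j).
Proof. intros Hj. pose proof (hc01 _ _ _ _ _ _ _ Hy j Hj) as Hc.
 replace (1 - c j) with (plus (scal (c j - 0) 0) (scal (1 - c j) 1))
   by (unfold plus, scal; simpl; unfold mult; simpl; ring).
 apply (is_RInt_Chasles (V:=R_CompleteNormedModule) _ 0 (c j) 1).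
 - apply (is_RInt_ext (V:=R_CompleteNormedModule) (fun _ => 0)).
   + intros x Hx. rewrite Rmin_left, Rmax_right in Hx by lra. symmetry. apply (hlo _ _ _ _ _ _ _ Hy). lra.
   + apply (is_RInt_const (V:=R_CompleteNormedModule)).
 - apply (is_RInt_ext (V:=R_CompleteNormedModule) (fun _ => 1)).
   + intros x Hx. rewrite Rmin_left, Rmax_right in Hx by lra. symmetry. apply (hhi _ _ _ _ _ _ _ Hy). lra.
   + apply (is_RInt_const (V:=R_CompleteNormedModule)).
Qed.

Lemma is_RInt_Phi g r c gm gp H M (Hy : Hyps g r c gm gp H M) m : (m <= r)%nat ->
  is_RInt (V:=R_CompleteNormedModule) (fun x => rsum m (fun j => (gp j - gm j) * H j x)) 0 1
     (rsum m (fun j => (gp j - gm j) * (1 - c j))).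
Proof. induction m; intros Hm.
 - simpl. replace 0 with (scal (1 - 0) 0) at 2 by (unfold scal; simpl; unfold mult; simpl; ring).
   apply (is_RInt_const (V:=R_CompleteNormedModule)).
 - simpl. apply (is_RInt_ext (V:=R_CompleteNormedModule)
      (fun x => plus (rsum m (fun j => (gp j - gm j) * H j x)) (scal (gp m - gm m) (H m x)))).
   + intros; reflexivity.
   + apply (is_RInt_plus (V:=R_CompleteNormedModule)). apply IHm; lia.
     apply (is_RInt_scal (V:=R_CompleteNormedModule)). apply (is_RInt_H g r c gm gp H M Hy). lia.
Qed.

Definition clamp (x : R) : R := Rmax 0 (Rmin 1 x).

Lemma clamp_lip x y : Rabs (clamp x - clamp y) <= Rabs (x - y).
Proof. unfold clamp, Rmax, Rmin. repeat destruct Rle_dec; unfold Rabs; repeat destruct Rcase_abs; lra. Qed.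

Lemma clamp_id x : 0 <= x <= 1 -> clamp x = x.
Proof. intros. unfold clamp, Rmax, Rmin. repeat destruct Rle_dec; lra. Qed.

Lemma lip_cont (f : R -> R) L x : 0 <= L -> (forall y z, Rabs (f y - f z) <= L * Rabs (y - z)) -> continuity_pt f x.
Proof. intros HL Hf. apply continuity_pt_filterlim. apply filterlim_locally. intros eps.
 assert (Hp : 0 < eps / (L + 1)) by (apply Rdiv_lt_0_compat; [apply cond_pos| lra]).
 exists (mkposreal _ Hp). intros y Hy. apply ball_R in Hy. apply ball_R.
 assert (Hy' : Rabs (y - x) < eps / (L + 1)) by exact Hy.
 eapply Rle_lt_trans. apply Hf.
 apply Rle_lt_trans with ((L + 1) * Rabs (y - x)).
 pose proof (Rabs_pos (y - x)). nra.
 replace (pos eps) with ((L + 1) * (eps / (L + 1))) by (field; lra).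
 apply Rmult_lt_compat_l; lra.
Qed.

Lemma main_generic g r c gm gp H M (Hy : Hyps g r c gm gp H M) :
  exists C, forall n, (0 < n)%nat ->
    Rabs (rsum (n - 1) (fun k => g (INR (S k) / INR n))
      - (INR n * RInt g 0 1 - (g 0 + g 1) / 2
         + rsum r (fun j => (rsum (n - 1) (fun k => H j (INR (S k) / INR n)) - INR n * (1 - c j) + 1 / 2)
                            * (gp j - gm j)))) <= C / INR n.
Proof.
 set (B := M + rsum (S (S r)) (fun a => rsum (S (S r)) (fun b => Rabs (Derive g ((pt r c a + pt r c b) / 2))))).
 set (L := Rabs B). set (K := Rabs M).
 assert (HL : 0 <= L) by apply Rabs_pos. assert (HK : 0 <= K) by apply Rabs_pos.
 assert (HdB : forall x, regular_pt r c x -> Rabs (Derive g x) <= L).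
 { intros x Hx. eapply Rle_trans. apply (dg_bound g r c gm gp H M Hy x Hx). apply Rle_abs. }
 set (s := sfun g r gm gp H).
 assert (Hs01 : forall y, 0 < y < 1 -> s y = g y - Phi r gm gp H y) by reflexivity.
 assert (Hlip : forall x y, 0 <= x <= 1 -> 0 <= y <= 1 -> Rabs (s x - s y) <= L * Rabs (x - y)).
 { assert (W : forall x y, 0 <= x <= y -> y <= 1 -> Rabs (s y - s x) <= L * (y - x)).
   { intros x y Hxy Hy1. apply (lip_bad s L c r HL x y (proj2 Hxy)).
     - intros z Hz Hzc. assert (Hreg : regular_pt r c z) by (split; [lra| intros j Hj E; apply (Hzc j Hj); auto]).
       destruct (der_transfer g r c gm gp H M Hy s z Hreg Hs01) as [D1 [D2 _]].
       split; auto. rewrite D2. auto.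
     - intros z Hz. apply (RC_s g r c gm gp H M Hy). lra.
     - intros z Hz. apply (LC_s g r c gm gp H M Hy). lra. }
   intros x y Hx Hy'. destruct (Rle_dec x y).
   - rewrite Rabs_minus_sym, (Rabs_minus_sym x). rewrite (Rabs_right (y - x)) by lra. apply W; lra.
   - rewrite (Rabs_right (x - y)) by lra. apply W; lra. }
 set (st := fun y => s (clamp y)).
 assert (Hstl : forall y z, Rabs (st y - st z) <= L * Rabs (y - z)).
 { intros y z. unfold st. eapply Rle_trans. apply Hlip; unfold clamp, Rmax, Rmin; repeat destruct Rle_dec; lra.
   apply Rmult_le_compat_l; auto. apply clamp_lip. }
 assert (Hstc : forall x, continuity_pt st x) by (intros; apply (lip_cont st L); auto).
 assert (Hst01 : forall y, 0 <= y <= 1 -> st y = s y) by (intros; unfold st; rewrite clamp_id; auto).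
 assert (Htrap : forall u v, 0 <= u -> u < v -> v <= 1 -> (forall j, (j < r)%nat -> ~ (u < c j < v)) ->
     Rabs (RInt st u v - (v - u) * (st u + st v) / 2) <= K * (v - u)^3).
 { intros u v Hu Huv Hv Hnc. apply trap; auto.
   intros z Hz. assert (Hreg : regular_pt r c z).
   { split; [lra|]. intros j Hj E. apply (Hnc j Hj). rewrite <- E. lra. }
   assert (Hst' : forall y, 0 < y < 1 -> st y = g y - Phi r gm gp H y) by (intros; rewrite Hst01 by lra; reflexivity).
   destruct (der_transfer g r c gm gp H M Hy st z Hreg Hst') as [D1 [D2 [D3 D4]]].
   split; auto. split; auto. rewrite D4. eapply Rle_trans. apply (hbd _ _ _ _ _ _ _ Hy z Hreg). apply Rle_abs. }
 exists (K + 2 * L * INR r). intros n Hn.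
 assert (Hnp : 0 < INR n) by (apply lt_0_INR; auto).
 assert (Main := sum_trap st r c L K n Hn HK HL Hstc
   (fun x y Hx Hy => Rle_trans _ _ _ (Hstl x y) (Rle_refl _)) Htrap).
 set (X := fun k => INR (S k) / INR n).
 assert (HX : forall k, (k < n - 1)%nat -> 0 < X k < 1).
 { intros k Hk. unfold X. split. apply Rdiv_lt_0_compat; auto. apply lt_0_INR; lia.
   apply (Rmult_lt_reg_r (INR n)); auto. unfold Rdiv. rewrite Rmult_assoc, Rinv_l, Rmult_1_r by lra.
   rewrite Rmult_1_l. apply lt_INR. lia. }
 assert (E1 : rsum (n - 1) (fun k => st (X k)) = rsum (n - 1) (fun k => s (X k))).
 { apply rsum_ext. intros k Hk. apply Hst01. pose proof (HX k Hk). lra. }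
 assert (E2 : st 0 = s 0) by (apply Hst01; lra).
 assert (E3 : st 1 = s 1) by (apply Hst01; lra).
 assert (E4 : RInt st 0 1 = RInt s 0 1).
 { apply RInt_ext. intros x Hx. rewrite Rmin_left, Rmax_right in Hx by lra. apply Hst01. lra. }
 assert (Hexs : ex_RInt s 0 1).
 { apply (ex_RInt_ext st). intros x Hx. rewrite Rmin_left, Rmax_right in Hx by lra. apply Hst01. lra.
   apply ex_RInt_cont; auto. }
 set (A := rsum r (fun j => (gp j - gm j) * (1 - c j))).
 assert (E5 : RInt g 0 1 = RInt s 0 1 + A).
 { apply is_RInt_unique.
   apply (is_RInt_ext (V:=R_CompleteNormedModule) (fun x => plus (s x) (Phi r gm gp H x))).
   - intros x _. unfold s, sfun, plus; simpl. ring.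
   - apply (is_RInt_plus (V:=R_CompleteNormedModule)). apply RInt_correct; auto.
     apply (is_RInt_Phi g r c gm gp H M Hy r). lia. }
 assert (E6 : s 0 = g 0).
 { unfold s, sfun, Phi. rewrite (rsum_ext _ _ (fun _ => 0)). rewrite rsum_const. ring.
   intros j Hj. rewrite (hlo _ _ _ _ _ _ _ Hy). ring. apply (hc01 _ _ _ _ _ _ _ Hy j Hj). }
 assert (E7 : s 1 = g 1 - rsum r (fun j => gp j - gm j)).
 { unfold s, sfun, Phi. rewrite (rsum_ext _ (fun j => (gp j - gm j) * H j 1) (fun j => gp j - gm j)). ring.
   intros j Hj. rewrite (hhi _ _ _ _ _ _ _ Hy). ring. apply (hc01 _ _ _ _ _ _ _ Hy j Hj). }
 assert (E8 : rsum (n - 1) (fun k => g (X k)) = rsum (n - 1) (fun k => s (X k))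
     + rsum r (fun j => (gp j - gm j) * rsum (n - 1) (fun k => H j (X k)))).
 { rewrite (rsum_ext r _ (fun j => rsum (n - 1) (fun k => (gp j - gm j) * H j (X k)))) by (intros; symmetry; apply rsum_scal).
   rewrite <- (rsum_swap (n - 1) r (fun k j => (gp j - gm j) * H j (X k))).
   rewrite <- rsum_plus. apply rsum_ext. intros k _. unfold s, sfun, Phi. ring. }
 assert (E9 : rsum r (fun j => (rsum (n - 1) (fun k => H j (X k)) - INR n * (1 - c j) + 1 / 2) * (gp j - gm j))
   = rsum r (fun j => (gp j - gm j) * rsum (n - 1) (fun k => H j (X k))) - INR n * A + 1 / 2 * rsum r (fun j => gp j - gm j)).
 { unfold A. rewrite <- !rsum_scal, <- rsum_minus, <- rsum_plus. apply rsum_ext. intros; ring. }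
 unfold X in *. rewrite E8, E9, E5.
 rewrite E1, E2, E3, E4, E6, E7 in Main.
 eapply Rle_trans; [|exact Main]. right. f_equal. field.
Qed.

Lemma Z_step a b : IZR a < IZR b + 1 -> IZR a <= IZR b.
Proof. intros H. rewrite <- plus_IZR in H. apply lt_IZR in H. apply IZR_le. lia. Qed.

Lemma Z_step2 a b : IZR b < IZR a -> IZR b + 1 <= IZR a.
Proof. intros H. apply lt_IZR in H. rewrite <- plus_IZR. apply IZR_le. lia. Qed.

Lemma floor_spec y : floorR y <= y /\ y < floorR y + 1.
Proof. unfold floorR. destruct (base_Int_part y). lra. Qed.

Lemma ceil_spec y : ceilR y - 1 < y /\ y <= ceilR y.
Proof. unfold ceilR. destruct (floor_spec (- y)). lra. Qed.

Lemma count_lt_gen y N : 0 <= y ->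
  rsum N (fun k => if Rlt_dec y (INR (S k)) then 1 else 0) = INR N - Rmin (INR N) (floorR y).
Proof. intros Hy. destruct (floor_spec y) as [F1 F2].
 assert (HF : forall N : nat, y < INR N + 1 -> floorR y <= INR N).
 { intros M HM. unfold floorR. rewrite INR_IZR_INZ. apply Z_step. unfold floorR in F1. rewrite <- INR_IZR_INZ. lra. }
 assert (HF2 : forall N : nat, INR N + 1 <= y -> INR N + 1 <= floorR y).
 { intros M HM. unfold floorR. rewrite INR_IZR_INZ. apply Z_step2. unfold floorR in F2. rewrite <- INR_IZR_INZ. lra. }
 induction N.
 - simpl. rewrite Rmin_left. ring. assert (-1 < floorR y) by lra. unfold floorR in *.
   replace (-1) with (IZR (-1)) in H by reflexivity. apply Z_step2 in H. simpl in H. lra.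
 - cbn [rsum]. rewrite IHN, S_INR. destruct (Rlt_dec y (INR N + 1)) as [h|h].
   + assert (floorR y <= INR N) by auto. rewrite !Rmin_right by lra. ring.
   + assert (INR N + 1 <= floorR y) by (apply HF2; lra). rewrite !Rmin_left by lra. ring.
Qed.

Lemma count_le_gen y N : 0 < y ->
  rsum N (fun k => if Rle_dec y (INR (S k)) then 1 else 0) = INR N - Rmin (INR N) (ceilR y - 1).
Proof. intros Hy. destruct (ceil_spec y) as [G1 G2].
 assert (HG : forall N : nat, y <= INR N + 1 -> ceilR y - 1 <= INR N).
 { intros M HM. unfold ceilR, floorR in *. rewrite <- opp_IZR in *. rewrite INR_IZR_INZ.
   cut (IZR (- Int_part (- y)) <= IZR (Z.of_nat M + 1)); [rewrite plus_IZR; lra|].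
   apply Z_step. rewrite plus_IZR, <- INR_IZR_INZ. lra. }
 assert (HG2 : forall N : nat, INR N + 1 < y -> INR N + 1 <= ceilR y - 1).
 { intros M HM. unfold ceilR, floorR in *. rewrite <- opp_IZR in *. rewrite INR_IZR_INZ.
   cut (IZR (Z.of_nat M) + 1 + 1 <= IZR (- Int_part (- y))). lra.
   rewrite <- plus_IZR. apply Z_step2. rewrite plus_IZR, <- INR_IZR_INZ. lra. }
 induction N.
 - simpl. rewrite Rmin_left. ring. assert (0 < ceilR y) by lra. unfold ceilR, floorR in *. rewrite <- opp_IZR in *.
   replace 0 with (IZR 0) in H by reflexivity. apply Z_step2 in H. lra.
 - cbn [rsum]. rewrite IHN, S_INR. destruct (Rle_dec y (INR N + 1)) as [h|h].
   + assert (ceilR y - 1 <= INR N) by auto. rewrite !Rmin_right by lra. ring.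
   + assert (INR N + 1 <= ceilR y - 1) by (apply HG2; lra). rewrite !Rmin_left by lra. ring.
Qed.

Lemma floor_le_nat y (N : nat) : y < INR N + 1 -> floorR y <= INR N.
Proof. intros HM. destruct (floor_spec y). unfold floorR in *. rewrite INR_IZR_INZ. apply Z_step. rewrite <- INR_IZR_INZ. lra. Qed.

Lemma ceil_le_nat y (N : nat) : y <= INR N + 1 -> ceilR y - 1 <= INR N.
Proof. intros HM. destruct (ceil_spec y). unfold ceilR, floorR in *. rewrite <- opp_IZR in *. rewrite INR_IZR_INZ.
   cut (IZR (- Int_part (- y)) <= IZR (Z.of_nat N + 1)); [rewrite plus_IZR; lra|].
   apply Z_step. rewrite plus_IZR, <- INR_IZR_INZ. lra. Qed.

Lemma div_lt_iff (n : nat) x a : (0 < n)%nat -> (x < a / INR n <-> INR n * x < a).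
Proof. intros Hn. assert (0 < INR n) by (apply lt_0_INR; auto). split; intros H1.
 - apply (Rmult_lt_compat_l (INR n)) in H1; auto. replace (INR n * (a / INR n)) with a in H1 by (field; lra). auto.
 - apply (Rmult_lt_reg_l (INR n)); auto. replace (INR n * (a / INR n)) with a by (field; lra). auto. Qed.

Lemma div_le_iff (n : nat) x a : (0 < n)%nat -> (x <= a / INR n <-> INR n * x <= a).
Proof. intros Hn. assert (0 < INR n) by (apply lt_0_INR; auto). split; intros H1.
 - apply (Rmult_le_compat_l (INR n)) in H1; [|lra]. replace (INR n * (a / INR n)) with a in H1 by (field; lra). auto.
 - apply (Rmult_le_reg_l (INR n)); auto. replace (INR n * (a / INR n)) with a by (field; lra). auto. Qed.

Lemma count_i (n : nat) x : (0 < n)%nat -> 0 < x < 1 ->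
  rsum (n - 1) (fun k => if Rlt_dec x (INR (S k) / INR n) then 1 else 0) - INR n * (1 - x) + 1 / 2
  = fracR (INR n * x) - 1 / 2.
Proof. intros Hn Hx. assert (Hnp : 0 < INR n) by (apply lt_0_INR; auto).
 rewrite (rsum_ext _ _ (fun k => if Rlt_dec (INR n * x) (INR (S k)) then 1 else 0)).
 2:{ intros k _. destruct (Rlt_dec x (INR (S k) / INR n)) as [h|h]; destruct Rlt_dec as [h'|h']; auto.
     exfalso; apply h'; apply div_lt_iff; auto. exfalso; apply h; apply div_lt_iff; auto. }
 rewrite count_lt_gen by nra.
 assert (Hf : floorR (INR n * x) <= INR (n - 1)) by (apply floor_le_nat; rewrite minus_INR by lia; simpl INR; nra).
 rewrite Rmin_right by exact Hf. rewrite minus_INR by lia. simpl INR. unfold fracR. field.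
Qed.

Lemma count_ii (n : nat) x : (0 < n)%nat -> 0 < x < 1 ->
  rsum (n - 1) (fun k => if Rle_dec x (INR (S k) / INR n) then 1 else 0) - INR n * (1 - x) + 1 / 2
  = fracR' (INR n * x) - 1 / 2.
Proof. intros Hn Hx. assert (Hnp : 0 < INR n) by (apply lt_0_INR; auto).
 rewrite (rsum_ext _ _ (fun k => if Rle_dec (INR n * x) (INR (S k)) then 1 else 0)).
 2:{ intros k _. destruct (Rle_dec x (INR (S k) / INR n)) as [h|h]; destruct Rle_dec as [h'|h']; auto.
     exfalso; apply h'; apply div_le_iff; auto. exfalso; apply h; apply div_le_iff; auto. }
 rewrite count_le_gen by nra.
 assert (Hf : ceilR (INR n * x) - 1 <= INR (n - 1)) by (apply ceil_le_nat; rewrite minus_INR by lia; simpl INR; nra).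
 rewrite Rmin_right by exact Hf. rewrite minus_INR by lia. simpl INR. unfold fracR'. field.
Qed.

Lemma lim_left_unique (f : R -> R) a l1 l2 :
  filterlim f (at_left a) (locally l1) -> filterlim f (at_left a) (locally l2) -> l1 = l2.
Proof. intros H1 H2.
 assert (Hall : forall eps, 0 < eps -> Rabs (l1 - l2) < 2 * eps).
 { intros eps He. destruct (lc_eps f a l1 H1 eps He) as [d1 [Hd1 A]].
   destruct (lc_eps f a l2 H2 eps He) as [d2 [Hd2 B]].
   set (y := a - Rmin d1 d2 / 2). assert (0 < Rmin d1 d2) by (apply Rmin_glb_lt; lra).
   pose proof (Rmin_l d1 d2). pose proof (Rmin_r d1 d2).
   assert (A' := A y ltac:(unfold y; lra)). assert (B' := B y ltac:(unfold y; lra)).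
   replace (l1 - l2) with (- (f y - l1) + (f y - l2)) by ring.
   eapply Rle_lt_trans. apply Rabs_triang. rewrite Rabs_Ropp. lra. }
 destruct (Req_dec l1 l2); auto. exfalso.
 assert (0 < Rabs (l1 - l2)) by (apply Rabs_pos_lt; lra).
 specialize (Hall (Rabs (l1 - l2) / 4) ltac:(lra)). lra.
Qed.

Lemma lim_right_unique (f : R -> R) a l1 l2 :
  filterlim f (at_right a) (locally l1) -> filterlim f (at_right a) (locally l2) -> l1 = l2.
Proof. intros H1 H2.
 assert (Hall : forall eps, 0 < eps -> Rabs (l1 - l2) < 2 * eps).
 { intros eps He. destruct (rc_eps f a l1 H1 eps He) as [d1 [Hd1 A]].
   destruct (rc_eps f a l2 H2 eps He) as [d2 [Hd2 B]].
   set (y := a + Rmin d1 d2 / 2). assert (0 < Rmin d1 d2) by (apply Rmin_glb_lt; lra).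
   pose proof (Rmin_l d1 d2). pose proof (Rmin_r d1 d2).
   assert (A' := A y ltac:(unfold y; lra)). assert (B' := B y ltac:(unfold y; lra)).
   replace (l1 - l2) with (- (f y - l1) + (f y - l2)) by ring.
   eapply Rle_lt_trans. apply Rabs_triang. rewrite Rabs_Ropp. lra. }
 destruct (Req_dec l1 l2); auto. exfalso.
 assert (0 < Rabs (l1 - l2)) by (apply Rabs_pos_lt; lra).
 specialize (Hall (Rabs (l1 - l2) / 4) ltac:(lra)). lra.
Qed.

Lemma c_mono (r : nat) (c : nat -> R) : (forall j, (S j < r)%nat -> c j < c (S j)) ->
  forall i j, (i < j)%nat -> (j < r)%nat -> c i < c j.
Proof. intros Hc i j. induction j; intros Hij Hjr; [lia|].
 destruct (Nat.eq_dec i j) as [->|Hne]. apply Hc; auto.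
 apply Rlt_trans with (c j). apply IHj; lia. apply Hc; auto. Qed.

Lemma c_inj (r : nat) (c : nat -> R) : (forall j, (S j < r)%nat -> c j < c (S j)) ->
  forall i j, (i < r)%nat -> (j < r)%nat -> c i = c j -> i = j.
Proof. intros Hc i j Hi Hj E. destruct (Nat.lt_total i j) as [h|[h|h]]; auto.
 - pose proof (c_mono r c Hc i j h Hj). lra.
 - pose proof (c_mono r c Hc j i h Hi). lra. Qed.

Theorem lemma2p2 (g : R -> R) (r : nat) (c : nat -> R)
  (gm gp : nat -> R)
  (Hc01 : forall j, (j < r)%nat -> 0 < c j < 1)
  (Hcinc : forall j, (S j < r)%nat -> c j < c (S j))
  (Hd : forall x, regular_pt r c x -> ex_derive g x /\ ex_derive (Derive g) x)
  (Hbd : exists M, forall x, regular_pt r c x -> Rabs (Derive (Derive g) x) <= M)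
  (H0 : filterlim g (at_right 0) (locally (g 0)))
  (H1 : filterlim g (at_left 1) (locally (g 1)))
  (Hgm : forall j, (j < r)%nat -> filterlim g (at_left (c j)) (locally (gm j)))
  (Hgp : forall j, (j < r)%nat -> filterlim g (at_right (c j)) (locally (gp j))) :
  ((forall j, (j < r)%nat -> filterlim g (at_left (c j)) (locally (g (c j)))) ->
   exists C : R, exists N : nat, forall n : nat, (N <= n)%nat -> (0 < n)%nat ->
     Rabs (rsum (n - 1) (fun k => g (INR (S k) / INR n))
           - (INR n * RInt g 0 1 - (g 0 + g 1) / 2
              + rsum r (fun j => (fracR (INR n * c j) - 1 / 2) * (gp j - gm j))))
       <= C / INR n)
  /\
  ((forall j, (j < r)%nat -> filterlim g (at_right (c j)) (locally (g (c j)))) ->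
   exists C : R, exists N : nat, forall n : nat, (N <= n)%nat -> (0 < n)%nat ->
     Rabs (rsum (n - 1) (fun k => g (INR (S k) / INR n))
           - (INR n * RInt g 0 1 - (g 0 + g 1) / 2
              + rsum r (fun j => (fracR' (INR n * c j) - 1 / 2) * (gp j - gm j))))
       <= C / INR n).
Proof.
 destruct Hbd as [M HM].
 split; intros Hcont.
 - set (H := fun (j : nat) (x : R) => if Rlt_dec (c j) x then 1 else 0).
   assert (Hy : Hyps g r c gm gp H M).
   { constructor; auto.
     - apply c_inj; auto.
     - intros j x Hx. unfold H. destruct Rlt_dec; lra.
     - intros j x Hx. unfold H. destruct Rlt_dec; lra.
     - intros j Hj. unfold H. destruct Rlt_dec; [lra|].
       rewrite (lim_left_unique g (c j) (g (c j)) (gm j)); auto. ring. }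
   destruct (main_generic g r c gm gp H M Hy) as [C HC].
   exists C, O. intros n _ Hn. specialize (HC n Hn).
   rewrite (rsum_ext r (fun j => (fracR (INR n * c j) - 1 / 2) * (gp j - gm j))
     (fun j => (rsum (n - 1) (fun k => H j (INR (S k) / INR n)) - INR n * (1 - c j) + 1 / 2) * (gp j - gm j))).
   exact HC.
   intros j Hj. unfold H. rewrite count_i; auto.
 - set (H := fun (j : nat) (x : R) => if Rle_dec (c j) x then 1 else 0).
   assert (Hy : Hyps g r c gm gp H M).
   { constructor; auto.
     - apply c_inj; auto.
     - intros j x Hx. unfold H. destruct Rle_dec; lra.
     - intros j x Hx. unfold H. destruct Rle_dec; lra.
     - intros j Hj. unfold H. destruct Rle_dec; [|lra].
       rewrite (lim_right_unique g (c j) (g (c j)) (gp j)); auto. ring. }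
   destruct (main_generic g r c gm gp H M Hy) as [C HC].
   exists C, O. intros n _ Hn. specialize (HC n Hn).
   rewrite (rsum_ext r (fun j => (fracR' (INR n * c j) - 1 / 2) * (gp j - gm j))
     (fun j => (rsum (n - 1) (fun k => H j (INR (S k) / INR n)) - INR n * (1 - c j) + 1 / 2) * (gp j - gm j))).
   exact HC.
   intros j Hj. unfold H. rewrite count_ii; auto.
Qed.
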